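(* There exist symmetric pseudo-Boolean functions of $n$ variables for which any quadratization must involve at least $\Omega(\sqrt{n})$ auxiliary variables; that is, there is a constant $c>0$ such that for infinitely many $n$ there is a symmetric $f:\{0,1\}^n\to\mathbb{R}$ every quadratization of which uses at least $c\sqrt n$ auxiliary variables.
   Context: A pseudo-Boolean function is a map $\{0,1\}^n\to\mathbb{R}$; it is symmetric if its value depends only on the Hamming weight. A quadratization of $f$ using $m$ auxiliary variables is a polynomial $g(x,y)$ of degree at most $2$ in $x_1,\ldots,x_n,y_1,\ldots,y_m$ such that $f(x)=\min\{g(x,y):y\in\{0,1\}^m\}$ for all $x\in\{0,1\}^n$. *)

(* Defs.v *)
From Stdlib Require Import Reals.
Open Scope R_scope.

Fixpoint sumR (k : nat) (F : nat -> R) : R :=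
  match k with
  | O => 0
  | S k' => sumR k' F + F k'
  end.

(* A point of {0,1}^n is encoded as x : nat -> bool with x i = false for i >= n. *)
Definition in_cube (n : nat) (x : nat -> bool) : Prop :=
  forall i, (n <= i)%nat -> x i = false.

Definition b2R (b : bool) : R := if b then 1 else 0.

Definition hweight (n : nat) (x : nat -> bool) : nat :=
  List.fold_right (fun i acc => ((if x i then 1 else 0) + acc)%nat) 0%nat (List.seq 0 n).

Definition symmetric_pbf (n : nat) (f : (nat -> bool) -> R) : Prop :=
  forall x x', in_cube n x -> in_cube n x' -> hweight n x = hweight n x' -> f x = f x'.

(* A polynomial of degree at most 2 in k variables z_0..z_{k-1}, given by
   its coefficients: a0 + sum_i a_i z_i + sum_{i,j} b_{ij} z_i z_j. *)
Record quad_poly := QuadPoly {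
  qp_const : R;
  qp_lin : nat -> R;
  qp_quad : nat -> nat -> R }.

Definition qp_eval (k : nat) (g : quad_poly) (z : nat -> bool) : R :=
  qp_const g
  + sumR k (fun i => qp_lin g i * b2R (z i))
  + sumR k (fun i => sumR k (fun j => qp_quad g i j * b2R (z i) * b2R (z j))).

(* Concatenate x in {0,1}^n and y in {0,1}^m into a point of {0,1}^(n+m):
   variables x_1..x_n are z_0..z_{n-1}, y_1..y_m are z_n..z_{n+m-1}. *)
Definition concat_pt (n : nat) (x y : nat -> bool) : nat -> bool :=
  fun i => if Nat.ltb i n then x i else y (i - n)%nat.

Definition is_quadratization (n m : nat) (f : (nat -> bool) -> R) (g : quad_poly) : Prop :=
  forall x, in_cube n x ->
    (forall y, in_cube m y -> f x <= qp_eval (n + m) g (concat_pt n x y)) /\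
    (exists y, in_cube m y /\ qp_eval (n + m) g (concat_pt n x y) = f x).

(* Main.v *)
Require Import Defs.
From Stdlib Require Import Reals Lia Lra Arith.
Open Scope R_scope.
From Stdlib Require Import IndefiniteDescription.

Lemma hweight_S n x : hweight (S n) x = (hweight n x + (if x n then 1 else 0))%nat.
Proof.
  unfold hweight. rewrite List.seq_S, List.fold_right_app. simpl.
  generalize (if x n then 1%nat else 0%nat) as c. intro c.
  induction (List.seq 0 n) as [|a l IH]; simpl; [lia|]. rewrite IH; lia.
Qed.

Lemma hweight_ext n x x' : (forall i, (i < n)%nat -> x i = x' i) -> hweight n x = hweight n x'.
Proof.
  induction n; intros H; [reflexivity|]. rewrite !hweight_S, IHn by (intros; apply H; lia).
  rewrite (H n) by lia. reflexivity.
Qed.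

Lemma hweight_add a b x : hweight (a + b) x = (hweight a x + hweight b (fun i => x (a + i)%nat))%nat.
Proof.
  induction b. { rewrite Nat.add_0_r. change (hweight 0 _) with 0%nat. lia. }
  rewrite Nat.add_succ_r, !hweight_S, IHb. lia.
Qed.

Lemma hweight_const n (c : bool) : hweight n (fun _ => c) = (n * Nat.b2n c)%nat.
Proof. induction n; [reflexivity|]. rewrite hweight_S, IHn. destruct c; simpl; lia. Qed.

Definition bitx (k i : nat) : bool := Nat.testbit k (Nat.log2 (i + 1)).

Lemma hweight_bits T k : hweight (2 ^ T - 1) (bitx k) = (k mod 2 ^ T)%nat.
Proof.
  induction T.
  - change (2^0)%nat with 1%nat. rewrite Nat.mod_1_r. reflexivity.
  - assert (E : (2 ^ S T - 1 = (2 ^ T - 1) + 2 ^ T)%nat).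
    { rewrite Nat.pow_succ_r'. pose proof (Nat.pow_nonzero 2 T). lia. }
    rewrite E, hweight_add, IHT.
    rewrite (hweight_ext _ _ (fun _ => Nat.testbit k T)).
    2:{ intros i Hi. unfold bitx. f_equal. apply Nat.log2_unique; [lia|].
        pose proof (Nat.pow_nonzero 2 T). rewrite Nat.pow_succ_r'. lia. }
    rewrite hweight_const.
    assert (B := Nat.testbit_spec' k T).
    rewrite Nat.pow_succ_r', (Nat.mul_comm 2), Nat.Div0.mod_mul_r by (try apply Nat.pow_nonzero; lia).
    rewrite B. lia.
Qed.

Lemma pow_big t : (10 <= t)%nat -> (4 * (t + 1) * (t + 1) + 1 <= 2 ^ t)%nat.
Proof.
  intro H. induction H. { simpl. lia. }
  rewrite Nat.pow_succ_r'. nia.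
Qed.

Lemma sumR_ext D f g : (forall r, (r < D)%nat -> f r = g r) -> sumR D f = sumR D g.
Proof. induction D; intro H; simpl; [reflexivity|]. rewrite IHD by (intros; apply H; lia). rewrite H by lia. reflexivity. Qed.
Lemma sumR_add D f g : sumR D (fun r => f r + g r) = sumR D f + sumR D g.
Proof. induction D; simpl; [ring|]. rewrite IHD. ring. Qed.
Lemma sumR_scal D c f : sumR D (fun r => c * f r) = c * sumR D f.
Proof. induction D; simpl; [ring|]. rewrite IHD. ring. Qed.
Lemma sumR_zero D f : (forall r, (r < D)%nat -> f r = 0) -> sumR D f = 0.
Proof. induction D; intro H; simpl; [reflexivity|]. rewrite IHD by (intros; apply H; lia). rewrite H by lia. ring. Qed.
Lemma sumR_basis D r0 F : (r0 < D)%nat ->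
  sumR D (fun r => (if Nat.eqb r r0 then 1 else 0) * F r) = F r0.
Proof.
  induction D; intro H; [lia|]. simpl.
  destruct (Nat.eq_dec r0 D) as [->|Hne].
  - rewrite Nat.eqb_refl, sumR_zero. ring.
    intros r Hr. destruct (Nat.eqb_spec r D); [lia|ring].
  - rewrite IHD by lia. destruct (Nat.eqb_spec D r0); [lia|ring].
Qed.

Definition rep (D : nat) (F : nat -> nat -> R) (h : nat -> R) : Prop :=
  exists th : nat -> R, forall k, h k = sumR D (fun r => th r * F k r).

Lemma rep_ext D F h h' : (forall k, h k = h' k) -> rep D F h -> rep D F h'.
Proof. intros E [th H]. exists th. intro k. rewrite <- E. apply H. Qed.
Lemma rep_add D F h1 h2 : rep D F h1 -> rep D F h2 -> rep D F (fun k => h1 k + h2 k).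
Proof.
  intros [t1 H1] [t2 H2]. exists (fun r => t1 r + t2 r). intro k.
  rewrite H1, H2, <- sumR_add. apply sumR_ext. intros; ring.
Qed.
Lemma rep_scal D F c h : rep D F h -> rep D F (fun k => c * h k).
Proof.
  intros [t1 H1]. exists (fun r => c * t1 r). intro k.
  rewrite H1, <- sumR_scal. apply sumR_ext. intros; ring.
Qed.
Lemma rep_zero D F : rep D F (fun _ => 0).
Proof. exists (fun _ => 0). intro k. symmetry. apply sumR_zero. intros; ring. Qed.
Lemma rep_sum D F K H : (forall i, (i < K)%nat -> rep D F (H i)) ->
  rep D F (fun k => sumR K (fun i => H i k)).
Proof.
  induction K; intro HH; simpl. { apply rep_zero. }
  apply rep_add; [apply IHK; intros; apply HH; lia | apply HH; lia].
Qed.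
Lemma rep_basis D F r0 : (r0 < D)%nat -> rep D F (fun k => F k r0).
Proof.
  intro H. exists (fun r => if Nat.eqb r r0 then 1 else 0). intro k.
  symmetry. apply sumR_basis. exact H.
Qed.

Definition V1 (t m : nat) : nat := (1 + t + m)%nat.
Definition wv (t : nat) (yk : nat -> nat -> bool) (k a : nat) : R :=
  if Nat.eqb a 0 then 1 else if Nat.leb a t then b2R (Nat.testbit k (a - 1))
  else b2R (yk k (a - 1 - t)%nat).
Definition feat (t m : nat) (yk : nat -> nat -> bool) (k r : nat) : R :=
  wv t yk k (r / V1 t m) * wv t yk k (r mod V1 t m).
Definition xk (t k i : nat) : bool := Nat.ltb i (2 ^ t - 1) && bitx k i.
Definition pidx (t i : nat) : nat :=
  if Nat.ltb i (2 ^ t - 1) then S (Nat.log2 (i + 1)) else (1 + t + (i - (2 ^ t - 1)))%nat.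

Lemma log2_lt t i : (i < 2 ^ t - 1)%nat -> (Nat.log2 (i + 1) < t)%nat.
Proof. intro H. apply Nat.log2_lt_pow2; lia. Qed.

Lemma b2R_concat t yk k i :
  b2R (concat_pt (2 ^ t - 1) (xk t k) (yk k) i) = wv t yk k (pidx t i).
Proof.
  unfold concat_pt, pidx, wv, xk.
  destruct (Nat.ltb_spec i (2 ^ t - 1)) as [Hi|Hi].
  - pose proof (log2_lt t i Hi).
    rewrite (proj2 (Nat.leb_le (S (Nat.log2 (i + 1))) t)) by lia.
    simpl Nat.eqb. unfold bitx. rewrite Nat.sub_succ, Nat.sub_0_r. reflexivity.
  - rewrite (proj2 (Nat.leb_gt (1 + t + (i - (2 ^ t - 1))) t)) by lia.
    simpl Nat.eqb. cbv iota. f_equal. f_equal. lia.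
Qed.

Lemma pidx_lt t m i : (i < 2 ^ t - 1 + m)%nat -> (pidx t i < V1 t m)%nat.
Proof.
  intro H. unfold pidx, V1. destruct (Nat.ltb_spec i (2 ^ t - 1)) as [Hi|Hi].
  - pose proof (log2_lt t i Hi). lia.
  - lia.
Qed.

Lemma wv0 t yk k : wv t yk k 0 = 1.
Proof. reflexivity. Qed.

Lemma feat_pair t m yk k a b : (a < V1 t m)%nat -> (b < V1 t m)%nat ->
  feat t m yk k (a * V1 t m + b) = wv t yk k a * wv t yk k b.
Proof.
  intros Ha Hb. unfold feat.
  assert (Hv : V1 t m <> 0%nat) by (unfold V1; lia).
  rewrite Nat.div_add_l by exact Hv. rewrite Nat.div_small by exact Hb. rewrite Nat.add_0_r.
  rewrite Nat.add_comm, Nat.Div0.mod_add, Nat.mod_small by exact Hb. reflexivity.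
Qed.

Lemma rep_pair t m yk a b : (a < V1 t m)%nat -> (b < V1 t m)%nat ->
  rep (V1 t m * V1 t m) (feat t m yk) (fun k => wv t yk k a * wv t yk k b).
Proof.
  intros Ha Hb. apply (rep_ext _ _ (fun k => feat t m yk k (a * V1 t m + b))).
  { intro k. apply feat_pair; assumption. }
  apply rep_basis. nia.
Qed.

Lemma rep_qp t m yk g :
  rep (V1 t m * V1 t m) (feat t m yk)
    (fun k => qp_eval (2 ^ t - 1 + m) g (concat_pt (2 ^ t - 1) (xk t k) (yk k))).
Proof.
  assert (H0 : (0 < V1 t m)%nat) by (unfold V1; lia).
  unfold qp_eval. apply rep_add; [apply rep_add|].
  - apply (rep_ext _ _ (fun k => qp_const g * (wv t yk k 0 * wv t yk k 0))).
    { intro k. rewrite wv0. ring. }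
    apply rep_scal, rep_pair; assumption.
  - apply rep_sum. intros i Hi.
    apply (rep_ext _ _ (fun k => qp_lin g i * (wv t yk k (pidx t i) * wv t yk k 0))).
    { intro k. rewrite wv0, b2R_concat. ring. }
    apply rep_scal, rep_pair; [apply pidx_lt|]; assumption.
  - apply rep_sum. intros i Hi. apply rep_sum. intros j Hj.
    apply (rep_ext _ _ (fun k => qp_quad g i j * (wv t yk k (pidx t i) * wv t yk k (pidx t j)))).
    { intro k. rewrite !b2R_concat. ring. }
    apply rep_scal, rep_pair; apply pidx_lt; assumption.
Qed.

Lemma wv_agree t m y1 y2 k a : (forall j, (j < m)%nat -> y1 k j = y2 k j) ->
  (a < V1 t m)%nat -> wv t y1 k a = wv t y2 k a.
Proof.
  intros H Ha. unfold wv, V1 in *.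
  destruct (Nat.eqb a 0); [reflexivity|]. destruct (Nat.leb_spec a t); [reflexivity|].
  rewrite H by lia. reflexivity.
Qed.

Lemma feat_agree t m y1 y2 k r : (forall j, (j < m)%nat -> y1 k j = y2 k j) ->
  (r < V1 t m * V1 t m)%nat -> feat t m y1 k r = feat t m y2 k r.
Proof.
  intros H Hr. assert (Hv : V1 t m <> 0%nat) by (unfold V1; lia). unfold feat.
  rewrite (wv_agree t m y1 y2 k (r / V1 t m)), (wv_agree t m y1 y2 k (r mod V1 t m)); auto.
  - apply Nat.mod_upper_bound; exact Hv.
  - apply Nat.Div0.div_lt_upper_bound. lia.
Qed.

Lemma weight_xk t k : (k < 2 ^ t)%nat -> hweight (2 ^ t - 1) (xk t k) = k.
Proof.
  intro H. rewrite (hweight_ext _ _ (bitx k)).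
  - rewrite hweight_bits. apply Nat.mod_small. exact H.
  - intros i Hi. unfold xk. destruct (Nat.ltb_spec i (2 ^ t - 1)); [reflexivity|lia].
Qed.

Lemma cube_xk t k : in_cube (2 ^ t - 1) (xk t k).
Proof. intros i Hi. unfold xk. destruct (Nat.ltb_spec i (2 ^ t - 1)); [lia|reflexivity]. Qed.

Lemma main_arith t m : (10 <= t)%nat -> (2 ^ t <= (1 + t + m) * (1 + t + m))%nat ->
  1 / 2 * sqrt (INR (2 ^ t - 1)) <= INR m.
Proof.
  intros Ht Hb. pose proof (pow_big t Ht) as Hp.
  set (n := (2 ^ t - 1)%nat) in *.
  assert (H1 : (2 * (t + 1) * (2 * (t + 1)) <= n)%nat) by (unfold n; lia).
  assert (H2 : (n <= (1 + t + m) * (1 + t + m))%nat) by (unfold n; lia).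
  apply le_INR in H1. apply le_INR in H2. rewrite !mult_INR in H1, H2.
  apply sqrt_le_1_alt in H1. apply sqrt_le_1_alt in H2.
  rewrite sqrt_square in H1 by apply pos_INR.
  rewrite sqrt_square in H2 by apply pos_INR.
  rewrite !mult_INR, !plus_INR in H1. rewrite !plus_INR in H2. simpl INR in H1, H2. lra.
Qed.

Definition NN (t : nat) : nat := (2 ^ t)%nat.
Definition DD (t m : nat) : nat := (V1 t m * V1 t m)%nat.

Lemma m_lt t m : (DD t m < NN t)%nat -> (m < NN t)%nat.
Proof. unfold DD, V1. nia. Qed.

Lemma theorem7_aux (Bad : nat -> R -> Prop)
  (Hex : forall t, exists s, Bad t s)
  (Hkey : forall t m s y th, (DD t m < NN t)%nat -> Bad t s ->
     (forall k, (k < NN t)%nat -> s ^ k = sumR (DD t m) (fun r => th r * feat t m y k r)) -> False) :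
  exists c : R, 0 < c /\
    forall N : nat, exists n : nat, (N <= n)%nat /\
      exists f : (nat -> bool) -> R, symmetric_pbf n f /\
        forall (m : nat) (g : quad_poly), is_quadratization n m f g ->
          c * sqrt (INR n) <= INR m.
Proof.
  exists (1/2). split; [lra|].
  intro N0. set (t := (N0 + 10)%nat). exists (2 ^ t - 1)%nat. split.
  { pose proof (Nat.pow_gt_lin_r 2 t). lia. }
  destruct (Hex t) as [s Hs].
  exists (fun x => s ^ hweight (2 ^ t - 1) x). split.
  { intros x x' _ _ E. rewrite E. reflexivity. }
  intros m g Hq.
  destruct (le_lt_dec (2 ^ t) ((1 + t + m) * (1 + t + m))) as [Hb|Hb].
  { apply main_arith; [unfold t; lia | exact Hb]. }
  exfalso.
  assert (Hy : forall k, exists y, in_cube m y /\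
     qp_eval (2 ^ t - 1 + m) g (concat_pt (2 ^ t - 1) (xk t k) y) = s ^ hweight (2 ^ t - 1) (xk t k)).
  { intro k. apply (Hq (xk t k) (cube_xk t k)). }
  pose (y := fun k => proj1_sig (constructive_indefinite_description _ (Hy k))).
  assert (Hyk : forall k, qp_eval (2 ^ t - 1 + m) g (concat_pt (2 ^ t - 1) (xk t k) (y k))
                          = s ^ hweight (2 ^ t - 1) (xk t k)).
  { intro k. exact (proj2 (proj2_sig (constructive_indefinite_description _ (Hy k)))). }
  destruct (rep_qp t m y g) as [th Hth].
  apply (Hkey t m s y th); [unfold DD, NN, V1; lia | exact Hs |].
  intros k Hk. rewrite <- Hth, Hyk, (weight_xk t k Hk). reflexivity.
Qed.

From mathcomp Require Import all_boot all_order all_algebra.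
From mathcomp Require Import Rstruct.
Set Implicit Arguments. Unset Strict Implicit. Unset Printing Implicit Defensive.
Import GRing.Theory Num.Theory.
Local Open Scope ring_scope.

Definition rowpoly N D (M : 'M[R]_(N,D)) (i : 'I_N) : {poly R} :=
  \sum_(j < N) (kermx M i j) *: 'X^j.
Definition facp N D (M : 'M[R]_(N,D)) : {poly R} :=
  \prod_(i < N) (if rowpoly M i == 0 then 1 else rowpoly M i).

Lemma facp_neq0 N D (M : 'M[R]_(N,D)) : facp M != 0.
Proof.
rewrite /facp; apply/prodf_neq0 => i _; case: ifP => [_|/negbT //]; exact: oner_neq0.
Qed.

Lemma core N D (M : 'M[R]_(N,D)) (s : R) (th : 'I_D -> R) : (D < N)%N ->
  ~~ root (facp M) s -> (forall k : 'I_N, s ^+ k = \sum_(r < D) th r * M k r) -> False.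
Proof.
move=> DN nr H.
have Kn0 : kermx M != 0.
  rewrite -mxrank_eq0 mxrank_ker subn_eq0 -ltnNge.
  exact: leq_ltn_trans (rank_leq_col M) DN.
have [i Hi] : exists i, row i (kermx M) != 0.
  apply/existsP; apply: contraR Kn0 => /existsPn Hr.
  apply/eqP/row_matrixP => i; rewrite row0; exact/eqP/negbNE/Hr.
have [j Hj] : exists j, kermx M i j != 0.
  apply/existsP; apply: contraR Hi => /existsPn Hr.
  apply/eqP/matrixP => a b; move: (Hr b); rewrite negbK => /eqP E; by rewrite mxE E mxE.
have pn0 : rowpoly M i != 0.
  apply: contra Hj => /eqP h; move: (congr1 (fun p : {poly R} => p`_j) h).
  rewrite coef0 /rowpoly coef_sum (bigD1 j) //= big1 ?addr0.
    by rewrite coefZ coefXn eqxx mulr1 => ->.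
  by move=> k /negbTE nk; rewrite coefZ coefXn eq_sym (inj_eq val_inj) nk mulr0.
move: nr; rewrite /facp (bigD1 i) //= rootM negb_or (negbTE pn0) => /andP[h _].
move: h; rewrite /root /rowpoly horner_sum.
under eq_bigr do rewrite hornerZ hornerXn H big_distrr.
rewrite exchange_big /= big1 ?eqxx //= => r _.
have := congr1 (fun A : 'M[R]_(N,D) => A i r) (mulmx_ker M); rewrite !mxE => E.
transitivity (th r * \sum_(k < N) kermx M i k * M k r); last by rewrite E mulr0.
rewrite big_distrr /=; apply: eq_bigr => k _; exact: mulrCA.
Qed.

Lemma sumR_big n (F : nat -> R) : sumR n F = \sum_(i < n) F i.
Proof. elim: n => [|n IH]; first by rewrite big_ord0. by rewrite big_ord_recr /= IH. Qed.

Definition ysig (t m : nat) (sg : {ffun 'I_(NN t) -> {ffun 'I_m -> bool}}) (k j : nat) : bool :=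
  match (insub k : option 'I_(NN t)), (insub j : option 'I_m) with
  | Some k', Some j' => sg k' j'
  | _, _ => false
  end.

Definition Mmat t m (sg : {ffun 'I_(NN t) -> {ffun 'I_m -> bool}}) : 'M[R]_(NN t, DD t m) :=
  \matrix_(k, r) feat t m (ysig sg) k r.

Definition bigP t : {poly R} :=
  \prod_(m < NN t) \prod_(sg : {ffun 'I_(NN t) -> {ffun 'I_m -> bool}}) facp (Mmat sg).

Lemma bigP_neq0 t : bigP t != 0.
Proof. apply/prodf_neq0 => m _; apply/prodf_neq0 => sg _; exact: facp_neq0. Qed.

Lemma bigP_root t m (sg : {ffun 'I_(NN t) -> {ffun 'I_m -> bool}}) s (Hm : (m < NN t)%N) :
  ~~ root (bigP t) s -> ~~ root (facp (Mmat sg)) s.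
Proof.
rewrite /bigP (bigD1 (Ordinal Hm)) //= rootM negb_or => /andP[h _].
by move: h; rewrite (bigD1 sg) //= rootM negb_or => /andP[].
Qed.

Lemma exists_nonroot t : exists s, ~~ root (bigP t) s.
Proof.
set p := bigP t.
have pn0 : p != 0 by exact: bigP_neq0.
have : ~~ all (fun i : nat => root p (i%:R : R)) (iota 0 (size p)).
  apply/negP => Hall.
  have : (size [seq (i%:R : R) | i <- iota 0 (size p)] < size p)%N.
    apply: (max_poly_roots pn0).
      by apply/allP => x /mapP[i Hi ->]; exact: (allP Hall).
    by rewrite map_inj_uniq ?iota_uniq // => a b /eqP; rewrite eqr_nat => /eqP.
  by rewrite size_map size_iota ltnn.
by case/allPn => i _ Hi; exists i%:R.
Qed.

Lemma key t m s (y : nat -> nat -> bool) (th : nat -> R) :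
  lt (DD t m) (NN t) -> ~~ root (bigP t) s ->
  (forall k, lt k (NN t) -> pow s k = sumR (DD t m) (fun r => th r * feat t m y k r)) -> False.
Proof.
move=> Hlt Hs H.
have Hm : (m < NN t)%N by apply/ltP; exact: m_lt.
pose sg := [ffun k : 'I_(NN t) => [ffun j : 'I_m => y (val k) (val j)]].
apply: (core (M := Mmat sg) (s := s) (th := fun r : 'I_(DD t m) => th r)).
- exact/ltP.
- exact: bigP_root Hm Hs.
- move=> k. rewrite -RpowE H; last exact/ltP.
  rewrite sumR_big; apply: eq_bigr => r _; rewrite mxE; congr (_ * _).
  apply: feat_agree; last exact/ltP.
  move=> j /ltP Hj; rewrite /ysig /= valK (insubT (fun x => (x < m)%N) Hj) /= !ffunE //.
Qed.

Local Close Scope ring_scope.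
Notation "x <= y" := (le x y) : nat_scope.
Open Scope R_scope.

Theorem theorem7 :
  exists c : R, 0 < c /\
    forall N : nat, exists n : nat, (N <= n)%nat /\
      exists f : (nat -> bool) -> R, symmetric_pbf n f /\
        forall (m : nat) (g : quad_poly), is_quadratization n m f g ->
          c * sqrt (INR n) <= INR m.
Proof.
exact: (theorem7_aux (fun t s => ~~ root (bigP t) s) exists_nonroot key).
Qed.
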